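(* Let $X$ be a standard conic bundle over a field $k$ with $n$ geometrically degenerate fibers, and let $G\subseteq W(\mathsf D_n)$ be its splitting group, i.e. the (finite) image of the Galois representation $\rho:\mathrm{Gal}(\bar k/k)\to \mathrm{Aut}_0(\mathrm{Pic}(\bar X))$. Let $G_2$ be a Sylow $2$-subgroup of $G$. Then $G$ satisfies the (H1) condition if and only if $G_2$ satisfies the (H1) condition.
   Context: A standard conic bundle $\pi:X\to\mathbb P^1$ over $k$ is a geometrically rational surface whose general fiber is a smooth conic and which has, over $\bar k$, $n$ degenerate fibers, each a union of two intersecting lines $q_j^+\cup q_j^-$. $\bar X=X\times_k\bar k$. $\mathrm{Aut}_0(\mathrm{Pic}(\bar X))$ denotes the automorphisms of $\mathrm{Pic}(\bar X)$ preserving the intersection form and $K_X$; the Galois action factors through the Weyl group $W(\mathsf D_n)$ (signed permutations of the pairs $q_j^\pm$ with an even number of sign changes). A finite group $H$ acting on $\mathrm{Pic}(\bar X)$ is said to satisfy the (H1) condition if $\mathrm H^1(H',\mathrm{Pic}(\bar X))=0$ for every subgroup $H'\subseteq H$. *)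

(* Defs.v *)
From HB Require Import structures.
From mathcomp Require Import all_boot all_order all_algebra all_fingroup all_solvable.
Set Implicit Arguments. Unset Strict Implicit. Unset Printing Implicit Defensive.
Import GRing.Theory Num.Theory.
Local Open Scope ring_scope.

(* The 2n lines q_j^+ = (j, true), q_j^- = (j, false) in the degenerate fibers.
   Elements of Aut(lines) are permutations of 'I_n * bool. *)
Definition line (n : nat) := ('I_n * bool)%type.
Notation lperm n := {perm ('I_n * bool)}.

Definition Jset n (p : lperm n) : {set 'I_n} :=
  [set k | [exists j, p (j, true) == (k, false)]].

(* W(D_n): signed permutations of the pairs {q_j^+, q_j^-} (i.e. permutations
   commuting with the involution q_j^+ <-> q_j^-) with an even number of
   sign changes. *)
Definition WD n : {set lperm n} :=
  [set p : lperm n | [forall x : 'I_n * bool, p (x.1, ~~ x.2) == ((p x).1, ~~ (p x).2)]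
                     && ~~ odd #|Jset p|].

(* Pic(Xbar) = Z S + Z F + sum_j Z E_j, where Xbar is the blow-up of a
   Hirzebruch surface in n points lying on distinct fibers, S a section class,
   F the fiber class, E_j = q_j^+ and q_j^- = F - E_j.
   An element ((a, b), c) stands for a S + b F + sum_j c_j E_j. *)
Definition pic (n : nat) := (int * int * {ffun 'I_n -> int})%type.

(* Action of p in W(D_n) on Pic(Xbar): q_x |-> q_(p x), F |-> F, and
   S |-> S + (|J|/2) F - sum_(k in J) E_k (forced by p(K_X) = K_X, where
   K_X = -2S - (e+2)F + sum_j E_j).  This is a right action:
   pic_act (p * r) = pic_act r \o pic_act p (mathcomp's perm product). *)
Definition pic_act n (p : lperm n) (v : pic n) : pic n :=
  let a := v.1.1 in let b := v.1.2 in let c := v.2 in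
  (a,
   b + a * (#|Jset p| %/ 2)%N%:Z
     + \sum_(j : 'I_n) (if (p (j, true)).2 then 0 else c j),
   [ffun k : 'I_n => (if k \in Jset p then - a else 0)
      + \sum_(j : 'I_n) (if p (j, true) == (k, true) then c j
                         else if p (j, true) == (k, false) then - c j else 0)]).

Definition H1_zero n (H : {set lperm n}) : Prop :=
  forall f : lperm n -> pic n,
    (forall g h, g \in H -> h \in H -> f (g * h)%g = pic_act h (f g) + f h) ->
    exists m : pic n, forall g, g \in H -> f g = pic_act g m - m.

Definition H1_condition n (H : {set lperm n}) : Prop :=
  forall H' : {group lperm n}, H' \subset H -> H1_zero H'.

(* Main.v *)
From HB Require Import structures.
Require Import Defs.
From mathcomp Require Import all_boot all_order all_algebra all_fingroup all_solvable.
From mathcomp Require Import ring zify.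
Set Implicit Arguments. Unset Strict Implicit. Unset Printing Implicit Defensive.
Import GRing.Theory Num.Theory.
Local Open Scope ring_scope.

Lemma picD n (u v : pic n) : u + v = (u.1.1 + v.1.1, u.1.2 + v.1.2, u.2 + v.2).
Proof. by []. Qed.
Lemma picN n (u : pic n) : - u = (- u.1.1, - u.1.2, - u.2).
Proof. by []. Qed.
Lemma pic0 n : (0 : pic n) = (0, 0, 0).
Proof. by []. Qed.
Lemma ffD n (f g : {ffun 'I_n -> int}) x : (f + g) x = f x + g x.
Proof. by rewrite /GRing.add /= ffunE. Qed.
Lemma ffN n (f : {ffun 'I_n -> int}) x : (- f) x = - f x.
Proof. by rewrite /GRing.opp /= ffunE. Qed.

Lemma pic_actB n (p : lperm n) : {morph pic_act p : x y / x - y}.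
Proof.
move=> [[a b] c] [[a' b'] c']; rewrite /pic_act !picD !picN /=.
congr ((_, _), _).
  rewrite (eq_bigr (fun j => (if (p (j, true)).2 then 0 else c j) - (if (p (j, true)).2 then 0 else c' j))); last first.
    by move=> j _; rewrite ffD ffN; case: ifP => _; rewrite ?subr0.
  rewrite sumrB; ring.
apply/ffunP => k; rewrite !(ffD, ffN, ffunE).
rewrite (eq_bigr (fun j => (if p (j, true) == (k, true) then c j else if p (j, true) == (k, false) then - c j else 0) - (if p (j, true) == (k, true) then c' j else if p (j, true) == (k, false) then - c' j else 0))); last first.
  by move=> j _; rewrite ffD ffN; case: ifP => _; [|case: ifP => _]; rewrite ?subr0 ?opprD.
rewrite sumrB; case: ifP => _; ring.
Qed.
HB.instance Definition _ n (p : lperm n) :=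
  GRing.isZmodMorphism.Build (pic n) (pic n) (pic_act p) (@pic_actB n p).
Lemma test n (p : lperm n) (u : pic n) (k : int) I (r : seq I) F : pic_act p (u *~ k) = pic_act p u *~ k /\ pic_act p 0 = 0 /\ pic_act p (\sum_(i <- r) F i) = \sum_(i <- r) pic_act p (F i).
Proof. by rewrite raddfMz raddf0 raddf_sum. Qed.
Definition sg n (p : lperm n) j := (p (j, true)).1.
Definition tt n (p : lperm n) j := (p (j, true)).2.
Definition invP n (p : lperm n) := forall j s, p (j, ~~ s) = ((p (j, s)).1, ~~ (p (j, s)).2).

Lemma WD_invP n p : p \in WD n -> invP p.
Proof.
rewrite inE => /andP [/forallP H _] j s.
by have /eqP := H (j, s).
Qed.

Lemma WD_even n p : p \in WD n -> ~~ odd #|Jset p|.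
Proof. by rewrite inE => /andP []. Qed.

Section Inv.
Variables (n : nat) (p : lperm n).
Hypothesis hp : invP p.

Lemma pE j : p (j, true) = (sg p j, tt p j).
Proof. by rewrite /sg /tt; case: (p _). Qed.

Lemma pEf j : p (j, false) = (sg p j, ~~ tt p j).
Proof. by rewrite (hp j true) pE. Qed.

Lemma pEs j s : p (j, s) = (sg p j, if s then tt p j else ~~ tt p j).
Proof. by case: s; rewrite ?pE ?pEf. Qed.

Lemma sg_inj : injective (sg p).
Proof.
move=> j j' e.
case E: (tt p j == tt p j').
  move/eqP: E => E; have : p (j, true) = p (j', true) by rewrite !pE e E.
  by move/perm_inj => [].
have : p (j, true) = p (j', false).
  by rewrite pE pEf e; congr (_, _); move: E; case: (tt p j); case: (tt p j').
by move/perm_inj => [].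
Qed.

Lemma inJ j : (sg p j \in Jset p) = ~~ tt p j.
Proof.
rewrite inE; apply/existsP/idP => [[j' /eqP]|H]; last by exists j; rewrite pE; case: (tt p j) H.
rewrite pE => -[/sg_inj -> ->] //.
Qed.

Lemma cardJ : #|Jset p| = (\sum_j (~~ tt p j : nat))%N.
Proof.
have -> : Jset p = [set sg p j | j in [set j | ~~ tt p j]].
  apply/setP => k; apply/idP/imsetP => [|[j]]; last by rewrite inE => H ->; rewrite inJ.
  rewrite inE => /existsP [j /eqP]; rewrite pE => -[<- E]; exists j => //.
  by rewrite inE E.
rewrite card_imset; last exact: sg_inj.
by rewrite -sum1dep_card big_mkcond; apply: eq_bigr => j _; case: (tt p j).
Qed.

Lemma sg_surj k : exists j, k = sg p j.
Proof.
exists (p^-1 (k, true))%g.1.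
case E: (p^-1 (k, true))%g => [j s] /=.
have := permKV p (k, true); rewrite E pEs /= => -[] //.
Qed.

Lemma act_c (v : pic n) j :
  (pic_act p v).2 (sg p j) = if tt p j then v.2 j else - v.1.1 - v.2 j.
Proof.
rewrite /pic_act /= ffunE inJ (bigD1 j) //= big1 => [|j' ne].
  by rewrite !pE; case: (tt p j); rewrite !xpair_eqE !eqxx /= ?addr0 ?add0r.
rewrite !pE; case: ifP => [/eqP [/sg_inj E _]|_]; first by rewrite E eqxx in ne.
by case: ifP => // /eqP [/sg_inj E _]; rewrite E eqxx in ne.
Qed.

Lemma pinv j s : (p^-1)%g (sg p j, s) = (j, if tt p j then s else ~~ s).
Proof.
apply: (@perm_inj _ p); rewrite permKV pEs.
by case: (tt p j); case: s.
Qed.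

End Inv.

Lemma invPM n (p r : lperm n) : invP p -> invP r -> invP (p * r)%g.
Proof. by move=> hp hr j s; rewrite !permM hp; case: (p (j, s)) => k t; apply: hr. Qed.

Lemma sgM n (p r : lperm n) : invP p -> invP r -> forall j, sg (p * r)%g j = sg r (sg p j).
Proof. by move=> hp hr j; rewrite /sg permM pE // pEs. Qed.

Lemma ttM n (p r : lperm n) : invP p -> invP r -> forall j,
  tt (p * r)%g j = if tt p j then tt r (sg p j) else ~~ tt r (sg p j).
Proof. by move=> hp hr j; rewrite /tt permM pE // pEs. Qed.
Lemma arith (a b s1 s2 : int) (W X Y Z : nat) :
  ~~ odd X -> ~~ odd Y -> (W + 2 * Z)%N = (X + Y)%N ->
  b + a * (W %/ 2)%N%:Z + (s1 + s2 + a *+ Z) = b + a * (X %/ 2)%N%:Z + s1 + a * (Y %/ 2)%N%:Z + s2.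
Proof.
rewrite -!dvdn2 => eX eY cnt.
have e : (W %/ 2)%N%:Z = (X %/ 2)%N%:Z + (Y %/ 2)%N%:Z - Z%:Z by lia.
rewrite e -mulr_natr natz; ring.
Qed.

Lemma comb_lemma n (T U : 'I_n -> bool) (a b : int) (c : 'I_n -> int) :
  ~~ odd (\sum_j (~~ T j : nat)) -> ~~ odd (\sum_j (~~ U j : nat)) ->
  b + a * ((\sum_j (~~ (if T j then U j else ~~ U j) : nat)) %/ 2)%N%:Z
    + \sum_j (if (if T j then U j else ~~ U j) then 0 else c j)
  = b + a * ((\sum_j (~~ T j : nat)) %/ 2)%N%:Z + \sum_j (if T j then 0 else c j)
    + a * ((\sum_j (~~ U j : nat)) %/ 2)%N%:Z
    + \sum_j (if U j then 0 else (if T j then c j else - a - c j)).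
Proof.
move=> eX eY.
have cnt : (\sum_j (~~ (if T j then U j else ~~ U j) : nat) + 2 * \sum_j (~~ T j && ~~ U j : nat)
   = \sum_j (~~ T j : nat) + \sum_j (~~ U j : nat))%N.
  rewrite big_distrr -!big_split /=; apply: eq_bigr => j _.
  by case: (T j); case: (U j).
have sm : \sum_j (if (if T j then U j else ~~ U j) then 0 else c j)
   = \sum_j (if T j then 0 else c j) + \sum_j (if U j then 0 else (if T j then c j else - a - c j))
     + \sum_j a *+ (~~ T j && ~~ U j : nat).
  rewrite -!big_split /=; apply: eq_bigr => j _.
  by case: (T j); case: (U j) => /=; ring.
rewrite sm sumrMnr; exact: (arith _ _ _ _ eX eY cnt).
Qed.

Lemma pic_ext n (u v : pic n) : u.1.1 = v.1.1 -> u.1.2 = v.1.2 -> u.2 =1 v.2 -> u = v.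
Proof. by case: u => [[a b] c]; case: v => [[a' b'] c'] /= -> -> /ffunP ->. Qed.

Lemma act_a n (p : lperm n) v : (pic_act p v).1.1 = v.1.1.
Proof. by []. Qed.
Lemma act_b n (p : lperm n) v : (pic_act p v).1.2 =
  v.1.2 + v.1.1 * (#|Jset p| %/ 2)%N%:Z + \sum_j (if tt p j then 0 else v.2 j).
Proof. by []. Qed.

Lemma invP1 n : invP (1%g : lperm n).
Proof. by move=> j s; rewrite !perm1. Qed.

Lemma pic_act1 n (v : pic n) : pic_act 1%g v = v.
Proof.
have h1 := @invP1 n.
have sg1 j : sg 1%g j = j by rewrite /sg perm1.
have tt1 j : tt 1%g j = true by rewrite /tt perm1.
apply: pic_ext => //.
  rewrite act_b cardJ //.
  rewrite (eq_bigr (fun _ => 0%N)); last by move=> j _; rewrite tt1.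
  rewrite big1_eq mulr0 addr0.
  by rewrite big1 ?addr0 // => j _; rewrite tt1.
move=> k; have := act_c h1 v k; rewrite sg1 tt1 => ->. done.
Qed.

Lemma pic_actM n (p r : lperm n) v : p \in WD n -> r \in WD n ->
  pic_act (p * r)%g v = pic_act r (pic_act p v).
Proof.
move=> Hp Hr; have hp := WD_invP Hp; have hr := WD_invP Hr.
have hpr := invPM hp hr.
apply: pic_ext => //.
  have E : \sum_k (if tt r k then 0 else (pic_act p v).2 k) =
     \sum_j (if tt r (sg p j) then 0 else (if tt p j then v.2 j else - v.1.1 - v.2 j)).
    by rewrite (reindex_inj (sg_inj hp)); apply: eq_bigr => j _; rewrite (act_c hp).
  rewrite !act_b !act_a E.
  have eX := WD_even Hp; have eY := WD_even Hr.
  rewrite !cardJ // in eX eY *.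
  have cY : (\sum_k (~~ tt r k : nat) = \sum_j (~~ tt r (sg p j) : nat))%N.
    by rewrite (reindex_inj (sg_inj hp)).
  rewrite cY in eY *.
  have -> : (\sum_j (~~ tt (p * r)%g j : nat))%N =
     (\sum_j (~~ (if tt p j then tt r (sg p j) else ~~ tt r (sg p j)) : nat))%N.
    by apply: eq_bigr => j _; rewrite (ttM hp hr).
  have -> : \sum_j (if tt (p * r)%g j then 0 else v.2 j) =
     \sum_j (if (if tt p j then tt r (sg p j) else ~~ tt r (sg p j)) then 0 else v.2 j).
    by apply: eq_bigr => j _; rewrite (ttM hp hr).
  exact: (comb_lemma (T := tt p) (U := fun j => tt r (sg p j))).
move=> k; have [j ->] := sg_surj hpr k.
rewrite (act_c hpr) (sgM hp hr) (act_c hr) act_a (act_c hp) (ttM hp hr).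
by case: (tt p j); case: (tt r (sg p j)) => /=; ring.
Qed.
Lemma hom0 (gT : finGroupType) (s : gT) (phi : gT -> int) :
  (forall k, phi (s ^+ k.+1)%g = phi s + phi (s ^+ k)%g) -> phi s = 0.
Proof.
move=> H.
have e0 : phi (s ^+ 0)%g = 0.
  by have := H 0%N; rewrite expg1 => e; apply: (addrI (phi s)); rewrite addr0 -e.
have ek k : phi (s ^+ k)%g = phi s *+ k.
  by elim: k => [|k IH]; rewrite ?e0 // H IH mulrS.
have := ek #[s]%g; rewrite expg_order -(expg0 s) e0 => /esym/eqP.
rewrite mulrn_eq0 => /orP [|/eqP //].
by rewrite eqn0Ngt order_gt0.
Qed.

Section PermMod.
Variables (T : finType) (H : {group {perm T}}) (W : {perm T} -> T -> int).
Hypothesis Wc : forall g h, g \in H -> h \in H -> forall y, W (g * h)%g y = W g ((h^-1)%g y) + W h y.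

Lemma stab0 s r : s \in H -> s r = r -> W s r = 0.
Proof.
move=> sH sr; apply: (hom0 (phi := fun t => W t r)) => k.
have Ek : (s ^+ k)%g r = r.
  by elim: k => [|k IH]; rewrite ?expg0 ?perm1 // expgS permM sr.
rewrite expgS Wc ?groupX //; congr (W s _ + _).
by rewrite -{1}Ek permK.
Qed.

Definition orb y := [set (h : {perm T}) y | h in H].
Definition rep y := odflt y [pick z in orb y].

Lemma orb_self y : y \in orb y.
Proof. by apply/imsetP; exists 1%g; rewrite ?group1 ?perm1. Qed.

Lemma orbE g y : g \in H -> orb ((g^-1)%g y) = orb y.
Proof.
move=> gH; apply/setP => z; apply/imsetP/imsetP => [[h hH ->]|[h hH ->]].
  by exists (g^-1 * h)%g; rewrite ?groupM ?groupV // permM.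
by exists (g * h)%g; rewrite ?groupM // permM permKV.
Qed.

Lemma rep_in y : rep y \in orb y.
Proof. by rewrite /rep; case: pickP => [z //|/(_ y)]; rewrite orb_self. Qed.

Lemma repE g y : g \in H -> rep ((g^-1)%g y) = rep y.
Proof.
move=> gH; rewrite /rep orbE //; case: pickP => [z //|/(_ y)]; by rewrite orb_self.
Qed.

Definition kk y := odflt 1%g [pick h in H | h (rep y) == y].

Lemma kk_spec y : kk y \in H /\ (kk y) (rep y) = y.
Proof.
rewrite /kk; case: pickP => [h /andP [hH /eqP e] //| none].
have /imsetP [h0 h0H e0] := rep_in y.
have := none (h0^-1)%g; rewrite groupV h0H e0 permK eqxx //.
Qed.

Lemma permmod_H1 : exists w : T -> int, forall g, g \in H -> forall y, W g y = w ((g^-1)%g y) - w y.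
Proof.
exists (fun y => - W (kk y) y) => g gH y; rewrite opprK.
have [kH ky] := kk_spec y.
have [k'H k'y] := kk_spec ((g^-1)%g y).
rewrite repE // in k'y.
set k := kk y in kH ky *; set k' := kk _ in k'H k'y *.
set r := rep y in ky k'y *.
pose s := (k' * g * k^-1)%g.
have sH : s \in H by rewrite !groupM ?groupV.
have sr : s r = r by rewrite !permM k'y permKV -{1}ky permK.
have e1 : (s * k)%g = (k' * g)%g by rewrite /s mulgKV.
have kinv : (k^-1)%g y = r by rewrite -ky permK.
have := Wc sH kH y; rewrite e1 Wc // kinv (stab0 sH sr) add0r => <-.
by rewrite addrA addNr add0r.
Qed.

End PermMod.

Lemma zmE (V : zmodType) (a b c d : V) : a - b - (c - d) = a - c - (b - d).
Proof. by rewrite !opprB !addrA addrAC (addrAC a) -!addrA (addrC d) !addrA addrAC. Qed.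
Lemma zmE2 (V : zmodType) (a b c d : V) : a + b - (c + d) = (a - c) + (b - d).
Proof. by rewrite opprD addrACA. Qed.
Lemma zmE3 (V : zmodType) (a b : V) : - (a - b) = - a - - b.
Proof. by rewrite opprB opprK addrC. Qed.

Section Coh.
Variables (n : nat) (G : {group lperm n}).
Hypothesis sGW : G \subset WD n.

Definition cocycle (H : {set lperm n}) (f : lperm n -> pic n) :=
  forall g h, g \in H -> h \in H -> f (g * h)%g = pic_act h (f g) + f h.
Definition cob (m : pic n) g := pic_act g m - m.

Lemma actM g h v : g \in G -> h \in G -> pic_act (g * h)%g v = pic_act h (pic_act g v).
Proof. by move=> gG hG; apply: pic_actM; apply: (subsetP sGW). Qed.

Lemma cob_cocycle (H : {set lperm n}) m : H \subset G -> cocycle H (cob m).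
Proof.
move=> sHG g h gH hH; rewrite /cob actM ?(subsetP sHG) // raddfB.
by rewrite addrA subrK.
Qed.

Lemma cobB m m' g : cob (m - m') g = cob m g - cob m' g.
Proof. by rewrite /cob raddfB zmE. Qed.
Lemma cobMn m k g : cob (m *+ k) g = cob m g *+ k.
Proof. by rewrite /cob raddfMn mulrnBl. Qed.
Lemma cobN m g : cob (- m) g = - cob m g.
Proof. by rewrite /cob raddfN zmE3. Qed.

Lemma cocycle1 (H : {group lperm n}) f : cocycle H f -> f 1%g = 0.
Proof.
move=> fc; have := fc 1%g 1%g (group1 H) (group1 H).
rewrite mulg1 pic_act1 => e; apply: (addrI (f 1%g)); by rewrite addr0 -e.
Qed.

Lemma cocycleB (H : {set lperm n}) f f' : cocycle H f -> cocycle H f' ->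
  cocycle H (fun g => f g - f' g).
Proof.
move=> fc fc' g h gH hH; rewrite fc // fc' // raddfB.
by rewrite zmE2.
Qed.

Lemma transfer (H P : {group lperm n}) f : H \subset G -> P \subset H -> cocycle H f ->
  (forall p, p \in P -> f p = 0) ->
  exists m, forall g, g \in H -> f g *+ #|H : P|%g = cob m g.
Proof.
move=> sHG sPH fc f0.
have fP p g : p \in P -> g \in H -> f (p * g)%g = f g.
  move=> pP gH; rewrite fc //; last exact: (subsetP sPH).
  by rewrite f0 // raddf0 add0r.
have fC C x : C \in rcosets P H -> x \in C -> f x = f (repr C).
  case/rcosetsP => y yH -> /rcosetP [p pP ->].
  have /rcosetP [p' p'P ->] := mem_repr_rcoset P y.
  by rewrite !fP.
exists (- \sum_(C in rcosets P H) f (repr C)) => g gH.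
have gN : g \in ('N(rcosets P H | 'Rs))%g := subsetP (actsRs_rcosets P H) g gH.
have := (reindex_astabs 'Rs g (F := fun C => f (repr C)) gN : \sum_(C in rcosets P H) f (repr C) = _).
have e1 : \sum_(C in rcosets P H) f (repr (('Rs)%act C g))
   = \sum_(C in rcosets P H) (pic_act g (f (repr C)) + f g).
  apply: eq_bigr => C CH /=.
  case/rcosetsP: (CH) => y yH CE.
  rewrite rcosetE -(fC (C :* g)%g (repr C * g)%g).
  - rewrite fc //; rewrite CE; have /rcosetP [p pP ->] := mem_repr_rcoset P y.
    by rewrite groupM // (subsetP sPH).
  - by rewrite CE -rcosetM; apply/rcosetsP; exists (y * g)%g; rewrite ?groupM.
  - by rewrite mem_rcoset mulgK CE; apply: mem_repr_rcoset.
rewrite e1.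
rewrite big_split /= sumr_const -raddf_sum => e.
by rewrite /cob raddfN opprK; apply/eqP; rewrite eq_sym addrC subr_eq [X in _ == X]addrC /indexg -e.
Qed.

Lemma pD11 (u v : pic n) : (u + v).1.1 = u.1.1 + v.1.1. Proof. by []. Qed.
Lemma pD12 (u v : pic n) : (u + v).1.2 = u.1.2 + v.1.2. Proof. by []. Qed.
Lemma pD2 (u v : pic n) j : (u + v).2 j = u.2 j + v.2 j. Proof. exact: ffD. Qed.
Lemma pN11 (u : pic n) : (- u).1.1 = - u.1.1. Proof. by []. Qed.
Lemma pN12 (u : pic n) : (- u).1.2 = - u.1.2. Proof. by []. Qed.
Lemma pN2 (u : pic n) j : (- u).2 j = - u.2 j. Proof. exact: ffN. Qed.
Lemma pMn11 (u : pic n) k : (u *+ k).1.1 = u.1.1 *+ k.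
Proof. by elim: k => [|k IH]; rewrite ?mulr0n // !mulrS pD11 IH. Qed.
Lemma pMn12 (u : pic n) k : (u *+ k).1.2 = u.1.2 *+ k.
Proof. by elim: k => [|k IH]; rewrite ?mulr0n // !mulrS pD12 IH. Qed.
Lemma pMn2 (u : pic n) k j : (u *+ k).2 j = u.2 j *+ k.
Proof. by elim: k => [|k IH]; rewrite ?mulr0n ?ffunE // !mulrS pD2 IH. Qed.

Definition betaf (u : pic n) := u.1.2 *+ 2 + \sum_j u.2 j.

Lemma betaD u v : betaf (u + v) = betaf u + betaf v.
Proof.
rewrite /betaf pD12 mulrnDl.
under eq_bigr => j _ do rewrite pD2.
by rewrite big_split /= addrACA.
Qed.

Lemma beta_act (t : lperm n) u : invP t -> u.1.1 = 0 -> betaf (pic_act t u) = betaf u.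
Proof.
move=> ht u0; rewrite /betaf (reindex_inj (sg_inj ht)) act_b u0 mul0r addr0.
under eq_bigr => j _ do rewrite (act_c ht) u0 sub0r.
rewrite mulrnDl -addrA; congr (_ + _).
rewrite -sumrMnl -big_split /=; apply: eq_bigr => j _.
by case: (tt t j); rewrite ?mul0rn ?add0r // mulr2n addrK.
Qed.

Lemma torsion (H : {group lperm n}) f : H \subset G -> cocycle H f ->
  exists m, forall g, g \in H -> f g *+ 4 = cob m g.
Proof.
move=> sHG fc.
have hW g : g \in H -> g \in WD n by move=> gH; apply: (subsetP sGW); apply: (subsetP sHG).
have hI g : g \in H -> invP g by move=> gH; apply: WD_invP; apply: hW.
have a0 g : g \in H -> (f g).1.1 = 0.
  move=> gH; apply: (hom0 (phi := fun t => (f t).1.1)) => k.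
  by rewrite expgS fc ?groupX // pD11 act_a.
have b0 g : g \in H -> betaf (f g) = 0.
  move=> gH; apply: (hom0 (phi := fun t => betaf (f t))) => k.
  rewrite expgS fc ?groupX // betaD beta_act // ?a0 //; apply: hI; by rewrite groupX.
pose W g (x : line n) := if x.2 then (f g).2 x.1 else - (f g).2 x.1.
have Wc : forall g h, g \in H -> h \in H -> forall y, W (g * h)%g y = W g ((h^-1)%g y) + W h y.
  move=> g h gH hH [k s]; have [j ->] := sg_surj (hI h hH) k.
  rewrite /W (pinv (hI h hH)) /= fc // pD2 (act_c (hI h hH)) a0 // sub0r.
  by case: (tt h j); case: s => /=; rewrite ?opprD ?opprK.
have [w wP] := permmod_H1 Wc.
pose mm j := w (j, true) - w (j, false).
have key g j : g \in H -> (f g).2 (sg g j) *+ 2 = (if tt g j then mm j else - mm j) - mm (sg g j).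
  move=> gH; have := wP g gH (sg g j, true); have := wP g gH (sg g j, false).
  rewrite /W /= !(pinv (hI g gH)) /mm => e1 e2.
  have -> : (f g).2 (sg g j) *+ 2 = (f g).2 (sg g j) - (- (f g).2 (sg g j)) by rewrite opprK mulr2n.
  by rewrite e1 e2; case: (tt g j) => /=; ring.
have hg g : g \in H -> injective (sg g) by move=> gH; apply: sg_inj; apply: hI.
exists ((0, 0, [ffun j => mm j *+ 2]) : pic n) => g gH.
apply: pic_ext.
- by rewrite pMn11 a0 // /cob pD11 pN11 act_a /= mul0rn subrr.
- have e : (f g).1.2 *+ 2 = - \sum_j (f g).2 j.
    by move: (b0 g gH); rewrite /betaf => /eqP; rewrite addr_eq0 => /eqP.
  have s2 : (\sum_j (f g).2 j) *+ 2 = \sum_j (if tt g j then mm j else - mm j) - \sum_j mm j.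
    rewrite (reindex_inj (hg g gH)) -sumrMnl.
    under eq_bigr => j _ do rewrite key //.
    rewrite sumrB; congr (_ - _).
    by rewrite [RHS](reindex_inj (hg g gH)).
  rewrite pMn12 /cob pD12 pN12 act_b /= mul0r addr0 add0r ?subr0 ?oppr0 ?addr0.
  have -> : (f g).1.2 *+ 4 = ((f g).1.2 *+ 2) *+ 2 by rewrite -mulrnA.
  rewrite e mulNrn s2 -sumrB -sumrN; apply: eq_bigr => j _.
  by rewrite ffunE; case: (tt g j); ring.
- move=> k; have [j ->] := sg_surj (hI g gH) k.
  rewrite pMn2.
  have -> : (f g).2 (sg g j) *+ 4 = ((f g).2 (sg g j) *+ 2) *+ 2 by rewrite -mulrnA.
  rewrite key // /cob pD2 pN2 (act_c (hI g gH)) /= !ffunE.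
  by case: (tt g j); ring.
Qed.

Lemma cobD m m' g : cob (m + m') g = cob m g + cob m' g.
Proof. by rewrite /cob raddfD zmE2. Qed.

Lemma conj_H1 (H : {group lperm n}) x : H \subset G -> x \in G ->
  H1_zero (H :^ x)%g -> H1_zero H.
Proof.
move=> sHG xG H1x f fc.
have inG y : y \in H -> y \in G by apply: (subsetP sHG).
have Jin y : y \in (H :^ x)%g -> (y ^ x^-1)%g \in H by rewrite mem_conjg.
have JG y : y \in (H :^ x)%g -> y \in G.
  by move=> /Jin /inG yG; rewrite -(conjgKV x y) groupJ // groupV.
pose f' y := pic_act x (f (y ^ x^-1)%g).
have fc' : forall g h, g \in (H :^ x)%g -> h \in (H :^ x)%g ->
    f' (g * h)%g = pic_act h (f' g) + f' h.
  move=> g h gH hH; rewrite /f' conjMg fc ?Jin // raddfD; congr (_ + _).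
  have E : (x * h)%g = (h ^ x^-1 * x)%g.
    by rewrite /conjg invgK mulgA mulgKV.
  by rewrite /= -actM ?(inG _ (Jin _ hH)) // -E actM // JG.
have [m' hm'] := H1x f' fc'.
exists (pic_act (x^-1)%g m') => h hH.
have hJ : (h ^ x)%g \in (H :^ x)%g by rewrite memJ_conjg.
have := hm' _ hJ; rewrite /f' conjgK => e.
have -> : f h = pic_act (x^-1)%g (pic_act x (f h)).
  by rewrite -actM ?groupV // (mulgV x) pic_act1.
have E2 : (x^-1 * h)%g = (h ^ x * x^-1)%g.
  by rewrite /conjg mulgA mulgK.
have hxG := JG _ hJ; have hG := inG _ hH.
by rewrite e raddfB /= -actM ?groupV // -E2 actM ?groupV.
Qed.

End Coh.

Theorem lemma3p1 (n : nat) (G G2 : {group {perm ('I_n * bool)}}) :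
  G \subset WD n -> (2.-Sylow(G) G2)%g ->
  (H1_condition G <-> H1_condition G2).
Proof.
move=> sGW sylG2; split.
  by move=> HG H' sH'; apply: HG; apply: subset_trans sH' (pHall_sub sylG2).
move=> HG2 H' sH'G f fc.
have [P sylP] := Sylow_exists 2 H'.
have sPH' : P \subset H' := pHall_sub sylP.
have sPG : P \subset G := subset_trans sPH' sH'G.
have [x xG sPx] := Sylow_Jsub sylG2 sPG (pHall_pgroup sylP).
have H1P : H1_zero P.
  apply: (conj_H1 sGW sPG xG); exact: (HG2 (P :^ x)%G sPx).
have fcP : cocycle P f by move=> g h gP hP; apply: fc; apply: (subsetP sPH').
have [m1 hm1] := H1P f fcP.
pose f' g := f g - cob m1 g.
have fc' : cocycle H' f'.
  by apply: cocycleB => //; apply: (cob_cocycle sGW).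
have f'0 p : p \in P -> f' p = 0 by move=> pP; rewrite /f' hm1 // subrr.
have [m2 hm2] := transfer sH'G sPH' fc' f'0.
have [m3 hm3] := torsion sGW sH'G fc'.
set t := #|H' : P|%g in hm2.
have todd : odd t.
  case/and3P: sylP => _ _; rewrite p'natE // dvdn2 negbK //.
set s := t./2.
have tt_e : (t * t = 4 * (s * s + s) + 1)%N.
  have ht : t = (s.*2).+1 by rewrite -[LHS](odd_double_half t) todd.
  rewrite ht -muln2; nia.
exists (m1 + (m2 *+ t - m3 *+ (s * s + s))) => g gH.
have -> : f g = f' g + cob m1 g by rewrite /f' subrK.
rewrite -[RHS]/(cob (m1 + (m2 *+ t - m3 *+ (s * s + s))) g).
rewrite !cobD cobN !cobMn -hm2 // -hm3 // addrC; congr (_ + _).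
by rewrite -!mulrnA tt_e mulrnDr mulr1n addrAC subrr add0r.
Qed.
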